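(* Fix mixture proportions $\pi_1,\ldots,\pi_M\in(0,1)$ with $\sum_i\pi_i=1$ and a kernel $K$ on $\{1,\ldots,M\}$ with $\sum_i\pi_iK(i,i)-\sum_{i,j}\pi_i\pi_jK(i,j)>0$. Let $W$ be a random variable and, for $i=1,\ldots,M$, let $Y_i$ be a random element of a measurable space $\mathcal Z$ defined jointly with $W$, with $Y_i\sim P_i$ (the law of $W$ being the same in each pair). Denote by $\eta(Y_1|W,\ldots,Y_M|W)$ the KMD of the conditional distributions of $Y_1,\ldots,Y_M$ given $W$. Then $$\mathbb E_W\big[\eta(Y_1|W,\ldots,Y_M|W)\big]\ge\eta(P_1,\ldots,P_M).$$
   Context: A kernel on $\{1,\ldots,M\}$ is a symmetric $K$ with $[K(i,j)]$ positive semidefinite. For probability measures $R_1,\dots,R_M$ on $\mathcal Z$: let $(\tilde Z,\tilde\Delta)$ have $\mathbb P(\tilde\Delta=i)=\pi_i$ and $\tilde Z\mid\tilde\Delta=i\sim R_i$; let $(\tilde Z_1,\tilde\Delta_1),(\tilde Z_2,\tilde\Delta_2)$ be i.i.d. copies; let $\tilde\Delta'$ satisfy $(\tilde Z,\tilde\Delta')\overset d=(\tilde Z,\tilde\Delta)$ with $\tilde\Delta,\tilde\Delta'$ conditionally independent given $\tilde Z$. The KMD is $$\eta(R_1,\ldots,R_M)=\frac{\mathbb E[K(\tilde\Delta,\tilde\Delta')]-\mathbb E[K(\tilde\Delta_1,\tilde\Delta_2)]}{\mathbb E[K(\tilde\Delta,\tilde\Delta)]-\mathbb E[K(\tilde\Delta_1,\tilde\Delta_2)]}.$$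 *)

(* Defs.v *)
From HB Require Import structures.
From mathcomp Require Import all_boot all_order all_algebra.
From mathcomp Require Import all_classical all_reals all_analysis.
Set Implicit Arguments. Unset Strict Implicit. Unset Printing Implicit Defensive.
Import Order.TTheory GRing.Theory Num.Theory.
Local Open Scope classical_set_scope.
Local Open Scope ring_scope.

Definition is_kernel (R : realType) (M : nat) (K : 'I_M -> 'I_M -> R) : Prop :=
  (forall i j, K i j = K j i) /\
  (forall v : 'I_M -> R, 0 <= \sum_(i < M) \sum_(j < M) v i * v j * K i j).

(* Setting of the KMD: Delta ~ pi, Z | Delta = i ~ Rm i.
   [q] is a version of the conditional probabilities q j z = P(Delta = j | Z = z):
   measurable, [0,1]-valued, and for every measurable A,
     P(Delta = j, Z \in A) = E[ q j Z ; Z \in A ],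
   i.e. pi_j Rm_j(A) = sum_i pi_i \int_A q_j dRm_i. *)
Definition is_cond_prob d (T : measurableType d) (R : realType) (M : nat)
    (pi : 'I_M -> R) (Rm : 'I_M -> {measure set T -> \bar R})
    (q : 'I_M -> T -> R) : Prop :=
  forall j, [/\ measurable_fun setT (q j),
    (forall z, 0 <= q j z <= 1) &
    forall A, measurable A ->
      ((pi j)%:E * Rm j A =
       \sum_(i < M) (pi i)%:E * \int[Rm i]_(z in A) (q j z)%:E)%E].

(* A chosen version of the conditional probabilities (a version exists by
   Radon-Nikodym; all versions agree almost surely). *)
Definition cond_prob d (T : measurableType d) (R : realType) (M : nat)
    (pi : 'I_M -> R) (Rm : 'I_M -> {measure set T -> \bar R}) : 'I_M -> T -> R :=
  match pselect (exists q, is_cond_prob pi Rm q) with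
  | left h => projT1 (cid h)
  | right _ => fun _ _ => 0
  end.

(* E[K(Delta, Delta')], Delta' conditionally independent copy given Z:
   E[K(Delta,Delta')] = E[ E[K(Delta,Delta') | Delta, Z] ]
                      = sum_i pi_i \int sum_j K(i,j) P(Delta'=j | Z=z) dRm_i(z). *)
Definition EK_cond d (T : measurableType d) (R : realType) (M : nat)
    (pi : 'I_M -> R) (K : 'I_M -> 'I_M -> R)
    (Rm : 'I_M -> {measure set T -> \bar R}) : R :=
  let q := cond_prob pi Rm in
  \sum_(i < M) pi i *
    fine (\int[Rm i]_z (\sum_(j < M) K i j * q j z)%:E)%E.

Definition EK_diag (R : realType) (M : nat) (pi : 'I_M -> R)
    (K : 'I_M -> 'I_M -> R) : R :=
  \sum_(i < M) pi i * K i i.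

Definition EK_indep (R : realType) (M : nat) (pi : 'I_M -> R)
    (K : 'I_M -> 'I_M -> R) : R :=
  \sum_(i < M) \sum_(j < M) pi i * pi j * K i j.

Definition KMD d (T : measurableType d) (R : realType) (M : nat)
    (pi : 'I_M -> R) (K : 'I_M -> 'I_M -> R)
    (Rm : 'I_M -> {measure set T -> \bar R}) : R :=
  (EK_cond pi K Rm - EK_indep pi K) / (EK_diag pi K - EK_indep pi K).

(* Main.v *)
Require Import Defs.
From HB Require Import structures.
From mathcomp Require Import all_boot all_order all_algebra.
From mathcomp Require Import all_classical all_reals all_analysis.
From mathcomp Require Import measurable_realfun.
From mathcomp Require Import ring lra.
Import Order.TTheory GRing.Theory Num.Theory.
Import numFieldNormedType.Exports.
Local Open Scope classical_set_scope.
Local Open Scope ring_scope.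
Lemma measurable_inv (R : realType) : measurable_fun [set: R] (fun x : R => x^-1).
Proof.
have -> : [set: R] = [set 0] `|` ~` [set 0] by rewrite setUv.
apply/measurable_funU => //; first exact: measurableC.
split.
- move=> _ B mB; have [B0|B0] := pselect (B (0^-1)).
    rewrite (_ : _ `&` _ = [set 0])//; apply/seteqP; split => x /=.
      by case.
    by move=> ->; split.
  rewrite (_ : _ `&` _ = set0)//; apply/seteqP; split => x //=.
  by case=> -> /=.
- apply: open_continuous_measurable_fun.
    rewrite openC; apply: accessible_closed_set1; apply: hausdorff_accessible; exact: Rhausdorff.
  move=> x; rewrite inE /= => /eqP x0; exact: inv_continuous.
Qed.

Section mixture.
Context d d' (X : measurableType d) (Z : measurableType d') (R : realType).
Variables (m : {measure set Z -> \bar R}) (nu : {measure set X -> \bar R})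
  (l : X -> {measure set Z -> \bar R}).
Local Open Scope ereal_scope.
Hypothesis ml : forall U, measurable U -> measurable_fun [set: X] (l ^~ U).
Hypothesis mE : forall U, measurable U -> (m U = \int[nu]_x l x U)%E.

Import HBNNSimple.
Local Open Scope ereal_scope.

Let mix_indic E (mE' : measurable E) :
  \int[m]_z (\1_E z)%:E = \int[nu]_y (\int[l y]_z (\1_E z)%:E).
Proof.
rewrite integral_indic// setIT mE//.
by apply: eq_integral => y _; rewrite integral_indic// setIT.
Qed.

Let mix_nnsfun (f : {nnsfun Z >-> R}) :
  \int[m]_z (f z)%:E = \int[nu]_y (\int[l y]_z (f z)%:E).
Proof.
under [in LHS]eq_integral do rewrite fimfunE -fsumEFin//.
rewrite ge0_integral_fsum//; last 2 first.
  - by move=> r; exact/measurable_EFinP/measurableT_comp.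
  - by move=> r z _; rewrite EFinM nnfun_muleindic_ge0.
under [in RHS]eq_integral.
  move=> y _.
  under eq_integral.
    by move=> z _; rewrite fimfunE -fsumEFin//; over.
  rewrite /= ge0_integral_fsum//; last 2 first.
    - by move=> r; exact/measurable_EFinP/measurableT_comp.
    - by move=> r z _; rewrite EFinM nnfun_muleindic_ge0.
  under eq_fsbigr.
    move=> r _.
    rewrite (integralZl_indic _ (fun r => f @^-1` [set r]))//; last first.
      by move=> r0; rewrite preimage_nnfun0.
    rewrite integral_indic// setIT.
    over.
  over.
rewrite /= ge0_integral_fsum//; last 2 first.
  - move=> r; apply: measurable_funeM.
    exact: ml.
  - move=> n y _.
    have := mulemu_ge0 (fun n => f @^-1` [set n]).
    by apply; exact: preimage_nnfun0.
apply: eq_fsbigr => r _.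
rewrite (integralZl_indic _ (fun r => f @^-1` [set r]))//; last first.
  exact: preimage_nnfun0.
rewrite /= mix_indic//.
have [r0|r0] := leP 0%R r.
  rewrite ge0_integralZl//.
    by under eq_integral do rewrite integral_indic// setIT.
  exact: ml.
rewrite integral0_eq ?mule0.
  by rewrite integral0_eq// => y _; rewrite preimage_nnfun0// measure0 mule0.
by move=> y _; rewrite integral0_eq// => z _; rewrite preimage_nnfun0// indic0.
Qed.

Lemma integral_mixture f : (forall z, 0 <= f z) -> measurable_fun [set: Z] f ->
  \int[m]_z f z = \int[nu]_y (\int[l y]_z f z).
Proof.
move=> f0 mf.
pose f_ := nnsfun_approx measurableT mf.
transitivity (\int[m]_z (lim ((f_ n z)%:E @[n --> \oo]))).
  by apply/eq_integral => z _; apply/esym/cvg_lim => //=; exact: cvg_nnsfun_approx.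
rewrite monotone_convergence//; last 3 first.
  by move=> n; exact/measurable_EFinP.
  by move=> n z _; rewrite lee_fin.
  by move=> z _ a b ab; rewrite lee_fin; exact/lefP/nd_nnsfun_approx.
rewrite (_ : (fun _ => _) =
    (fun n => \int[nu]_y (\int[l y]_z (f_ n z)%:E)))//; last first.
  by apply/funext => n; rewrite mix_nnsfun.
transitivity (\int[nu]_y lim ((\int[l y]_z (f_ n z)%:E) @[n --> \oo])).
  rewrite -monotone_convergence//; last 3 first.
  - move=> n; apply: measurable_fun_integral_kernel => //.
    + by move=> z; rewrite lee_fin.
    + exact/measurable_EFinP.
  - by move=> n y _; apply: integral_ge0 => // z _; rewrite lee_fin.
  - move=> y _ a b ab; apply: ge0_le_integral => //.
    + by move=> z _; rewrite lee_fin.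
    + exact/measurable_EFinP.
    + exact/measurable_EFinP.
    + by move=> z _; rewrite lee_fin; exact/lefP/nd_nnsfun_approx.
apply: eq_integral => y _; rewrite -monotone_convergence//; last 3 first.
  - by move=> n; exact/measurable_EFinP.
  - by move=> n z _; rewrite lee_fin.
  - by move=> z _ a b ab; rewrite lee_fin; exact/lefP/nd_nnsfun_approx.
by apply: eq_integral => z _; apply/cvg_lim => //; exact: cvg_nnsfun_approx.
Qed.

End mixture.

Section density.
Context d (T : measurableType d) (R : realType).
Local Open Scope ereal_scope.
Variables (nu m : {measure set T -> \bar R}) (g : T -> R).
Hypotheses (g0 : forall z, (0 <= g z)%R) (mg : measurable_fun setT g).
Hypothesis mE : forall U, measurable U -> m U = \int[nu]_(z in U) (g z)%:E.

Lemma integral_density f : (forall z, 0 <= f z) -> measurable_fun setT f ->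
  \int[m]_z f z = \int[nu]_z ((g z)%:E * f z).
Proof.
move=> f0 mf.
pose l z : {measure set T -> \bar R} := mscale (NngNum (g0 z)) (\d_ z).
have lE z U : l z U = ((g \* \1_U) z)%:E.
  have -> : l z U = (g z)%:E * \d_ z U by [].
  by rewrite diracE /= indicE EFinM.
rewrite (@integral_mixture _ _ T T R m nu l).
- apply: eq_integral => z _.
  rewrite ge0_integral_mscale//= integral_dirac//= diracE in_setT mul1e//.
- move=> U mU; under eq_fun do rewrite lE.
  by apply/measurable_EFinP; apply: measurable_funM => //; exact: measurable_indic.
- move=> U mU; rewrite mE// integral_mkcond; apply: eq_integral => z _.
  rewrite lE /patch /= indicE; case: ifP => _; by rewrite ?mulr1 ?mulr0.
- exact: f0.
- exact: mf.
Qed.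
End density.

Set Implicit Arguments. Unset Strict Implicit. Unset Printing Implicit Defensive.
Definition bmf d (T : measurableType d) (R : realType) (f : T -> R) :=
  measurable_fun setT f /\ exists C, forall x, `|f x| <= C.

Section bmf.
Context d (T : measurableType d) (R : realType).
Implicit Types f g : T -> R.

Lemma bmf_cst (c : R) : bmf (fun _ : T => c).
Proof. by split; [exact: measurable_cst | exists `|c|]. Qed.

Lemma bmf_add f g : bmf f -> bmf g -> bmf (fun x => f x + g x).
Proof.
move=> [mf [C HC]] [mg [D HD]]; split; first exact: measurable_funD.
by exists (C + D) => x; apply: le_trans (ler_normD _ _) _; apply: lerD.
Qed.

Lemma bmf_mul f g : bmf f -> bmf g -> bmf (fun x => f x * g x).
Proof.
move=> [mf [C HC]] [mg [D HD]]; split; first exact: measurable_funM.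
exists (C * D) => x; rewrite normrM; apply: ler_pM => //.
Qed.

Lemma bmf_opp f : bmf f -> bmf (fun x => - f x).
Proof.
move=> [mf [C HC]]; split; first exact: measurableT_comp.
by exists C => x; rewrite normrN.
Qed.

Lemma bmf_sub f g : bmf f -> bmf g -> bmf (fun x => f x - g x).
Proof. by move=> hf hg; apply: bmf_add => //; exact: bmf_opp. Qed.

Lemma bmf_sum (I : Type) (s : seq I) (F : I -> T -> R) :
  (forall i, bmf (F i)) -> bmf (fun x => \sum_(i <- s) F i x).
Proof.
move=> HF; elim: s => [|a s IH].
  by under eq_fun do rewrite big_nil; exact: bmf_cst.
by under eq_fun do rewrite big_cons; exact: bmf_add.
Qed.

Variable mu : {measure set T -> \bar R}.
Hypothesis mu1 : mu setT = 1%E.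

Lemma bmf_int f : bmf f -> mu.-integrable setT (EFin \o f).
Proof.
move=> [mf [C HC]]; apply: measurable_bounded_integrable => //.
  by rewrite mu1 ltry.
exists C; split; first by rewrite num_real.
by move=> M CM x _; apply: le_trans (HC x) (ltW CM).
Qed.

Lemma Rint_cst (c : R) : Rintegral mu setT (fun _ => c) = c.
Proof. by rewrite Rintegral_cst// mu1 /= mulr1. Qed.

Lemma RintD f g : bmf f -> bmf g ->
  Rintegral mu setT (fun x => f x + g x) = Rintegral mu setT f + Rintegral mu setT g.
Proof. by move=> hf hg; rewrite RintegralD//; exact: bmf_int. Qed.

Lemma RintB f g : bmf f -> bmf g ->
  Rintegral mu setT (fun x => f x - g x) = Rintegral mu setT f - Rintegral mu setT g.
Proof. by move=> hf hg; rewrite RintegralB//; exact: bmf_int. Qed.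

Lemma RintZ (c : R) f : bmf f ->
  Rintegral mu setT (fun x => c * f x) = c * Rintegral mu setT f.
Proof. by move=> hf; rewrite RintegralZl//; exact: bmf_int. Qed.

Lemma Rint_sum (I : Type) (s : seq I) (F : I -> T -> R) :
  (forall i, bmf (F i)) ->
  Rintegral mu setT (fun x => \sum_(i <- s) F i x) =
  \sum_(i <- s) Rintegral mu setT (F i).
Proof.
move=> HF; elim: s => [|a s IH].
  by under eq_Rintegral do rewrite big_nil; rewrite Rint_cst big_nil.
under eq_Rintegral do rewrite big_cons.
by rewrite RintD ?IH ?big_cons//; exact: bmf_sum.
Qed.

Lemma Rint_le f g : bmf f -> bmf g -> (forall x, f x <= g x) ->
  Rintegral mu setT f <= Rintegral mu setT g.
Proof. by move=> hf hg fg; apply: le_Rintegral => //; exact: bmf_int. Qed.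

Lemma Rint_ge0 f : (forall x, 0 <= f x) -> 0 <= Rintegral mu setT f.
Proof. by move=> f0; apply: Rintegral_ge0. Qed.

Lemma Rint_norm f (C : R) : measurable_fun setT f -> (forall x, `|f x| <= C) ->
  `|Rintegral mu setT f| <= C.
Proof.
move=> mf HC; have hf : bmf f by split => //; exists C.
apply: (le_trans (le_normr_Rintegral measurableT (bmf_int hf))).
rewrite -[C in _ <= C]Rint_cst; apply: Rint_le => //.
- by case: hf => _ [D HD]; split; [exact: measurableT_comp|exists D => x; rewrite normr_id].
- exact: bmf_cst.
Qed.

Lemma RintE f : bmf f -> (Rintegral mu setT f)%:E = (\int[mu]_x (f x)%:E)%E.
Proof. by move=> hf; rewrite /Rintegral fineK//; apply: integrable_fin_num => //; exact: bmf_int. Qed.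

End bmf.


Lemma sum_integral d (T : measurableType d) (R : realType) (mu0 : {measure set T -> \bar R})
  (I : Type) (s : seq I) (F : I -> T -> R) (c : I -> R) :
  (forall i z, 0 <= F i z) -> (forall i, measurable_fun setT (F i)) -> (forall i, 0 <= c i) ->
  (\sum_(i <- s) (c i)%:E * \int[mu0]_z (F i z)%:E = \int[mu0]_z (\sum_(i <- s) c i * F i z)%:E)%E.
Proof.
move=> F0 mF c0.
under [RHS]eq_integral do rewrite -sumEFin.
rewrite ge0_integral_sum//; last 2 first.
- by move=> i; apply/measurable_EFinP; apply: measurable_funM => //; exact: measurable_cst.
- by move=> i z _; rewrite lee_fin mulr_ge0.
apply: eq_bigr => i _; under [RHS]eq_integral do rewrite EFinM.
rewrite ge0_integralZl//; [exact/measurable_EFinP| |by rewrite lee_fin].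
by move=> z _; rewrite lee_fin.
Qed.


Lemma psd_ineq (R : realType) (M : nat) (K : 'I_M -> 'I_M -> R) :
  is_kernel K -> forall r q : 'I_M -> R,
  2 * (\sum_(j < M) r j * \sum_(k < M) K j k * q k)
    - \sum_(j < M) q j * \sum_(k < M) K j k * q k
  <= \sum_(j < M) r j * \sum_(k < M) K j k * r k.
Proof.
move=> [Ksym Kpsd] r q.
pose B (u v : 'I_M -> R) := \sum_(j < M) u j * \sum_(k < M) K j k * v k.
have Bsym u v : B u v = B v u.
  rewrite /B; under eq_bigr do rewrite mulr_sumr.
  rewrite exchange_big; apply: eq_bigr => k _; rewrite mulr_sumr.
  by apply: eq_bigr => j _; rewrite Ksym; ring.
have BBl u v w : B (fun j => u j - v j) w = B u w - B v w.
  by rewrite /B -sumrB; apply: eq_bigr => j _; rewrite mulrBl.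
have BBr u v w : B u (fun j => v j - w j) = B u v - B u w.
  rewrite /B -sumrB; apply: eq_bigr => j _; rewrite -mulrBr; congr (_ * _).
  by rewrite -sumrB; apply: eq_bigr => k _; rewrite mulrBr.
have P0 : 0 <= B (fun j => r j - q j) (fun j => r j - q j).
  have := Kpsd (fun j => r j - q j); congr (_ <= _).
  apply: eq_bigr => j _; rewrite mulr_sumr; apply: eq_bigr => k _; ring.
rewrite BBl !BBr (Bsym q r) in P0.
rewrite -/(B r q) -/(B q q) -/(B r r).
lra.
Qed.


Lemma measurable_sumR d (T : measurableType d) (R : realType) (I : Type) (s : seq I)
  (F : I -> T -> R) : (forall i, measurable_fun setT (F i)) ->
  measurable_fun setT (fun x => \sum_(i <- s) F i x).
Proof.
move=> mF; elim: s => [|a s IH].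
  by under eq_fun do rewrite big_nil; exact: measurable_cst.
by under eq_fun do rewrite big_cons; exact: measurable_funD.
Qed.

Section fam.
Context d (T : measurableType d) (R : realType) (M : nat) (pi : 'I_M -> R)
  (Rm : 'I_M -> {measure set T -> \bar R}).
Hypotheses (pi_gt0 : forall i, 0 < pi i) (Rm1 : forall i, Rm i setT = 1%E).
Variable i0 : 'I_M.

Definition pi_nn i : {nonneg R} := NngNum (ltW (pi_gt0 i)).
Definition mix_m (k : nat) : {measure set T -> \bar R} :=
  mscale (pi_nn (insubd i0 k)) (Rm (insubd i0 k)).
Definition mixmu := msum mix_m M.

Lemma int_mix f : (forall z, 0 <= f z)%E -> measurable_fun setT f ->
  (\int[mixmu]_z f z = \sum_(i < M) (pi i)%:E * \int[Rm i]_z f z)%E.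
Proof.
move=> f0 mf; rewrite ge0_integral_measure_sum//; apply: eq_bigr => i _.
by rewrite ge0_integral_mscale//= valKd.
Qed.

Lemma cond_id_ge0 q j : is_cond_prob pi Rm q -> forall h : T -> R,
  (forall z, 0 <= h z) -> measurable_fun setT h ->
  ((pi j)%:E * \int[Rm j]_z (h z)%:E =
   \sum_(i < M) (pi i)%:E * \int[Rm i]_z (q j z * h z)%:E)%E.
Proof.
move=> hq h h0 mh; have [mq q01 qE] := hq j.
have -> : ((pi j)%:E * \int[Rm j]_z (h z)%:E =
    \int[mscale (pi_nn j) (Rm j)]_z (h z)%:E)%E.
  rewrite ge0_integral_mscale//.
  all: try (by move=> z _; rewrite lee_fin).
  all: try exact/measurable_EFinP.
have q0 : forall z, 0 <= q j z by move=> z; case/andP: (q01 z).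
have mE : forall U, measurable U -> (mscale (pi_nn j) (Rm j) U = \int[mixmu]_(z in U) (q j z)%:E)%E.
  move=> U mU; rewrite (_ : mscale _ _ U = (pi j)%:E * Rm j U)%E// qE//.
  rewrite integral_mkcond int_mix; last 2 first.
    by move=> z; rewrite /patch; case: ifP => // _; rewrite lee_fin; case/andP: (q01 z).
    by apply/(measurable_restrictT _ mU)/measurable_EFinP; exact: measurable_funS mq.
  by apply: eq_bigr => i _; rewrite integral_mkcond.
rewrite (@integral_density _ _ _ mixmu _ (q j) q0 mq mE); last 2 first.
- by move=> z; rewrite lee_fin.
- exact/measurable_EFinP.
rewrite int_mix; last 2 first.
  by move=> z; rewrite -EFinM lee_fin mulr_ge0//; case/andP: (q01 z).
  by apply/measurable_EFinP; exact: measurable_funM.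
by apply: eq_bigr => i _; under eq_integral do rewrite -EFinM.
Qed.

Notation Rint i f := (Rintegral (Rm i) setT f).

Lemma bmf_q q j : is_cond_prob pi Rm q -> bmf (q j).
Proof.
move=> hq; have [mq q01 _] := hq j; split => //; exists 1 => z.
by case/andP: (q01 z) => q0 q1; rewrite ger0_norm.
Qed.

Lemma cond_id q j : is_cond_prob pi Rm q -> forall h : T -> R, bmf h ->
  \sum_(i < M) pi i * Rint i (fun z => q j z * h z) = pi j * Rint j h.
Proof.
move=> hq h hh.
have key g : (forall z, 0 <= g z) -> bmf g ->
    \sum_(i < M) pi i * Rint i (fun z => q j z * g z) = pi j * Rint j g.
  move=> g0 hg; apply/EFin_inj; rewrite EFinM RintE// (@cond_id_ge0 q j hq)//; last by case: hg.
  rewrite -sumEFin; apply: eq_bigr => i _; rewrite EFinM RintE//.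
  exact: bmf_mul (bmf_q _ hq) hg.
have [mh [C HC]] := hh.
have hC : bmf (fun _ : T => C) by exact: bmf_cst.
have hC0 z : 0 <= h z + C.
  by have := ler_norm (- h z); rewrite normrN => Hn; have := HC z; lra.
pose S g := \sum_(i < M) pi i * Rint i (fun z => q j z * g z).
have e1 : S (fun z => h z + C) = pi j * Rint j (fun z => h z + C).
  exact: key (bmf_add hh hC).
have e2 : S (fun _ => C) = pi j * Rint j (fun _ => C).
  by apply: key => // z; apply: le_trans (HC z).
have e3 : S (fun z => h z + C) = S h + S (fun _ => C).
  rewrite /S -big_split /=; apply: eq_bigr => i _.
  rewrite -mulrDr -RintD//; last 2 first.
    by apply: bmf_mul => //; exact: bmf_q.
    by apply: bmf_mul => //; exact: bmf_q.
  by congr (_ * _); apply: eq_Rintegral => z _; rewrite mulrDr.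
have e4 : Rint j (fun z => h z + C) = Rint j h + Rint j (fun _ => C).
  exact: RintD.
move: e1; rewrite e3 e4 mulrDr -e2 => /addIr.
done.
Qed.



Lemma cond_idL r : is_cond_prob pi Rm r -> forall G : 'I_M -> T -> R,
  (forall j, bmf (G j)) ->
  \sum_(i < M) pi i * Rint i (fun z => \sum_(j < M) r j z * G j z) =
  \sum_(j < M) pi j * Rint j (G j).
Proof.
move=> hr G hG.
have e i : Rint i (fun z => \sum_(j < M) r j z * G j z) =
    \sum_(j < M) Rint i (fun z => r j z * G j z).
  by apply: Rint_sum => // j; apply: bmf_mul => //; exact: bmf_q.
under eq_bigr do rewrite e mulr_sumr.
rewrite exchange_big; apply: eq_bigr => j _; exact: cond_id.
Qed.

Definition bK (K : 'I_M -> 'I_M -> R) (q : 'I_M -> T -> R) i z :=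
  \sum_(j < M) K i j * q j z.
Definition cK K q z := \sum_(j < M) q j z * bK K q j z.
Definition Tfun K q :=
  \sum_(i < M) pi i * Rint i (fun z => 2 * bK K q i z - cK K q z).

Lemma bmf_bK K q : (forall j, bmf (q j)) -> forall i, bmf (bK K q i).
Proof. by move=> hq i; apply: bmf_sum => j; apply: bmf_mul => //; exact: bmf_cst. Qed.

Lemma bmf_cK K q : (forall j, bmf (q j)) -> bmf (cK K q).
Proof. by move=> hq; apply: bmf_sum => j; apply: bmf_mul => //; exact: bmf_bK. Qed.

Lemma TfunE r K : is_cond_prob pi Rm r ->
  Tfun K r = \sum_(i < M) pi i * Rint i (bK K r i).
Proof.
move=> hr; have hq j := bmf_q j hr.
have eC := cond_idL hr (bmf_bK K hq).
rewrite /Tfun.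
transitivity (\sum_(i < M) (2 * (pi i * Rint i (bK K r i)) - pi i * Rint i (cK K r))).
  apply: eq_bigr => i _; rewrite RintB//; last 2 first.
  - by apply: bmf_mul; [exact: bmf_cst|exact: bmf_bK].
  - exact: bmf_cK.
  rewrite RintZ//; last exact: bmf_bK.
  by rewrite mulrBr mulrCA.
rewrite sumrB -mulr_sumr.
have -> : \sum_(i < M) pi i * Rint i (cK K r) = \sum_(i < M) pi i * Rint i (bK K r i).
  by rewrite -eC.
by rewrite mulr2n mulrDl mul1r addrK.
Qed.

Lemma Tfun_le r q K : is_cond_prob pi Rm r -> (forall j, bmf (q j)) -> is_kernel K ->
  Tfun K q <= \sum_(i < M) pi i * Rint i (bK K r i).
Proof.
move=> hr hq hK; have hr' j := bmf_q j hr.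
rewrite -(cond_idL hr (bmf_bK K hr')).
have h2b : forall j, bmf (fun z => 2 * bK K q j z).
  by move=> j; apply: bmf_mul; [exact: bmf_cst|exact: bmf_bK].
have e2 := cond_idL hr h2b.
have hrb : bmf (fun z => \sum_(j < M) r j z * (2 * bK K q j z)).
  by apply: bmf_sum => j; exact: bmf_mul.
have -> : Tfun K q = \sum_(i < M) pi i *
    Rint i (fun z => \sum_(j < M) r j z * (2 * bK K q j z) - cK K q z).
  transitivity (\sum_(i < M) pi i * Rint i (fun z => 2 * bK K q i z)
     - \sum_(i < M) pi i * Rint i (cK K q)).
    rewrite /Tfun -sumrB; apply: eq_bigr => i _.
    by rewrite RintB// ?mulrBr//; exact: bmf_cK.
  rewrite -e2 -sumrB; apply: eq_bigr => i _.
  by rewrite RintB// ?mulrBr//; exact: bmf_cK.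
apply: ler_sum => i _; apply: ler_wpM2l; first exact: ltW.
apply: Rint_le => //.
- by apply: bmf_sub => //; exact: bmf_cK.
- by apply: bmf_sum => j; apply: bmf_mul => //; exact: bmf_bK.
move=> z; have := psd_ineq hK (r ^~ z) (q ^~ z).
rewrite /cK /bK.
have -> : \sum_(j < M) r j z * (2 * \sum_(j0 < M) K j j0 * q j0 z) =
    2 * (\sum_(j < M) r j z * \sum_(k < M) K j k * q k z).
  by rewrite mulr_sumr; apply: eq_bigr => j _; ring.
done.
Qed.

Lemma cond_prob_prop j : measurable_fun setT (cond_prob pi Rm j) /\
  forall z, 0 <= cond_prob pi Rm j z <= 1.
Proof.
rewrite /cond_prob; case: pselect => [h|_].
  by case: (cid h) => q hq /=; have [mq q01 _] := hq j.
by split => [|z]; [exact: measurable_cst|rewrite lexx ler01].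
Qed.

Lemma EK_condE K : EK_cond pi K Rm =
  \sum_(i < M) pi i * Rint i (bK K (cond_prob pi Rm) i).
Proof. by []. Qed.

Lemma EK_cond_bound K : `|EK_cond pi K Rm| <= \sum_(i < M) pi i * \sum_(j < M) `|K i j|.
Proof.
rewrite EK_condE; apply: le_trans (ler_norm_sum _ _ _) _.
apply: ler_sum => i _; rewrite normrM gtr0_norm//; apply: ler_wpM2l; first exact: ltW.
have hq j : bmf (cond_prob pi Rm j).
  have [mq q01] := cond_prob_prop j; split => //; exists 1 => z.
  by have /andP[q0 q1] := q01 z; rewrite ger0_norm.
apply: Rint_norm => //.
  by case: (bmf_bK K hq i).
move=> z; apply: le_trans (ler_norm_sum _ _ _) _; apply: ler_sum => j _.
rewrite normrM; have [_ q01] := cond_prob_prop j; have /andP[q0 q1] := q01 z.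
by rewrite (ger0_norm q0) ler_piMr.
Qed.

Lemma mixmuT : (mixmu setT = (\sum_(i < M) pi i)%:E)%E.
Proof.
transitivity (\int[mixmu]_z (cst 1%E z))%E; first by rewrite integral_cst// mul1e.
rewrite int_mix; [|by move=> z; exact: lee01|exact: measurable_cst].
rewrite -sumEFin; apply: eq_bigr => i _.
by rewrite integral_cst// mul1e Rm1 mule1.
Qed.

Lemma mixmu0 i A : measurable A -> mixmu A = 0%E -> Rm i A = 0%E.
Proof.
move=> mA; rewrite /mixmu /= /msum (bigD1 i)//= valKd => /eqP.
rewrite padde_eq0; last 2 first.
- by rewrite mule_ge0// lee_fin; exact: ltW.
- by apply: sume_ge0 => k _; exact: measure_ge0.
case/andP => /eqP + _; move/eqP; rewrite mule_eq0 eqe (gt_eqF (pi_gt0 i))/=.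
by move/eqP.
Qed.

Lemma cond_exists : exists q, is_cond_prob pi Rm q.
Proof.
have mixT : (mixmu setT < +oo)%E by rewrite mixmuT ltry.
pose mu' := mfrestr (@measurableT _ T) mixT.
have RT i : (Rm i setT < +oo)%E by rewrite Rm1 ltry.
have H i : exists f : T -> \bar R,
  [/\ forall x : T, (0%R <= f x)%E, forall x : T, f x \is a fin_num,
      mu'.-integrable [set: T] f
    & forall A : set T, d.-measurable A ->
      mfrestr (@measurableT _ T) (RT i) A = (\int[mu']_(x in A) f x)%E].
  apply: radon_nikodym_sigma_finite.
  apply/null_content_dominatesP => A mA.
  change (mixmu (A `&` setT) = 0%E -> Rm i (A `&` setT) = 0%E).
  rewrite !setIT; exact: mixmu0.
have [f Hf] := choice H.
pose g i z := fine (f i z).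
have g0 i z : 0 <= g i z by have [f0 _ _ _] := Hf i; exact: fine_ge0.
have mg i : measurable_fun setT (g i).
  have [_ _ fi _] := Hf i; apply: measurableT_comp => //.
  exact: measurable_int fi.
have gE i A : measurable A -> Rm i A = (\int[mixmu]_(x in A) (g i x)%:E)%E.
  move=> mA; have [_ ffin _ fE] := Hf i.
  have := fE A mA.
  have -> : mfrestr (@measurableT _ T) (RT i) A = Rm i A by rewrite -[in RHS](setIT A).
  move=> ->.
  rewrite (@eq_measure_integral _ _ _ _ mixmu); last first.
    by move=> B mB _; rewrite -[in RHS](setIT B).
  by apply: eq_integral => x _; rewrite /g fineK.
pose s z := \sum_(k < M) pi k * g k z.
have s0 z : 0 <= s z.
  by apply: sumr_ge0 => k _; apply: mulr_ge0; [exact: ltW|exact: g0].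
have sge j z : pi j * g j z <= s z.
  rewrite /s (bigD1 j) //= lerDl; apply: sumr_ge0 => k _.
  by apply: mulr_ge0; [exact: ltW|exact: g0].
pose q j z := pi j * g j z * (s z)^-1.
have sq j z : s z * q j z = pi j * g j z.
  have [e|sn0] := eqVneq (s z) 0.
    rewrite e mul0r; apply/esym/eqP; rewrite eq_le; apply/andP; split.
      by rewrite -e; exact: sge.
    by apply: mulr_ge0; [exact: ltW|exact: g0].
  by rewrite /q mulrC divfK.
have q0 j z : 0 <= q j z by rewrite /q mulr_ge0 ?invr_ge0// mulr_ge0// ltW.
have q1 j z : q j z <= 1.
  have [s00|sn0] := eqVneq (s z) 0; first by rewrite /q s00 invr0 mulr0.
  by rewrite /q ler_pdivrMr ?mul1r// lt_neqAle eq_sym sn0 s0.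
have ms : measurable_fun setT s.
  by apply: measurable_sumR => k; apply: measurable_funM => //; exact: measurable_cst.
have mq j : measurable_fun setT (q j).
  apply: measurable_funM; first by apply: measurable_funM => //; exact: measurable_cst.
  exact: measurableT_comp (@measurable_inv R) ms.
exists q => j; split => //; first by move=> z; rewrite q0 q1.
move=> A mA.
have e1 i : (\int[Rm i]_(z in A) (q j z)%:E =
    \int[mixmu]_z ((g i z)%:E * (q j z * \1_A z)%:E))%E.
  rewrite integral_mkcond.
  rewrite (eq_integral (fun z => (q j z * \1_A z)%:E)); last first.
    by move=> z _; rewrite /patch indicE; case: ifP => _; rewrite ?mulr1 ?mulr0.
  apply: (@integral_density _ _ _ mixmu (Rm i) (g i) (g0 i) (mg i) (gE i)).
  - by move=> z; rewrite lee_fin mulr_ge0.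
  - by apply/measurable_EFinP; apply: measurable_funM; [exact: mq|exact: measurable_indic].
under eq_bigr do rewrite e1.
under eq_bigr do under eq_integral do rewrite -EFinM.
rewrite sum_integral; last 3 first.
- by move=> i z; rewrite mulr_ge0// mulr_ge0.
- move=> i; apply: measurable_funM; first exact: mg.
  by apply: measurable_funM; [exact: mq|exact: measurable_indic].
- by move=> i; exact: ltW.
rewrite (eq_integral (fun z => (pi j)%:E * (g j z * \1_A z)%:E)%E); last first.
  move=> z _; rewrite -EFinM; congr EFin.
  rewrite (_ : \sum_(i < M) pi i * (g i z * (q j z * \1_A z)) = s z * q j z * \1_A z).
    by rewrite sq mulrA.
  by rewrite /s mulr_suml mulr_suml; apply: eq_bigr => i _; ring.
rewrite ge0_integralZl//; last 3 first.
- by apply/measurable_EFinP; apply: measurable_funM; [exact: mg|exact: measurable_indic].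
- by move=> z _; rewrite lee_fin mulr_ge0.
- by rewrite lee_fin ltW.
congr (_ * _)%E.
have gE' : Rm j A = (\int[mixmu]_z (g j z * \1_A z)%:E)%E.
  rewrite gE// integral_mkcond; apply: eq_integral => z _.
  by rewrite /patch indicE; case: ifP => _; rewrite ?mulr1 ?mulr0.
exact: gE'.
Qed.

Lemma cond_probP : is_cond_prob pi Rm (cond_prob pi Rm).
Proof.
rewrite /cond_prob; case: pselect => [h|nh]; first by case: (cid h).
by exfalso; apply: nh; exact: cond_exists.
Qed.
End fam.


Lemma mix_real dW (TW : measurableType dW) dZ (Z : measurableType dZ) (R : realType)
  (muW : {measure set TW -> \bar R}) (m : {measure set Z -> \bar R})
  (kap : R.-ker TW ~> Z) :
  muW setT = 1%E -> m setT = 1%E -> (forall w, kap w setT = 1%E) ->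
  (forall B, measurable B -> m B = (\int[muW]_w kap w B)%E) ->
  forall h, bmf h ->
  bmf (fun w => Rintegral (kap w) setT h) /\
  Rintegral m setT h = Rintegral muW setT (fun w => Rintegral (kap w) setT h).
Proof.
move=> muW1 m1 kap1 mE h hh.
have [mh [C HC]] := hh.
have hC : bmf (fun _ : Z => C) by exact: bmf_cst.
have hg : bmf (fun z => h z + C) by exact: bmf_add.
have g0 z : 0 <= h z + C.
  by have := ler_norm (- h z); rewrite normrN => Hn; have := HC z; lra.
have ek w : (\int[kap w]_z (h z + C)%:E)%E = (Rintegral (kap w) setT h + C)%:E.
  by rewrite -RintE// RintD// Rint_cst.
have mk : measurable_fun setT (fun w => (\int[kap w]_z (h z + C)%:E)%E).
  apply: measurable_fun_integral_kernel.
  - by move=> U mU; exact: measurable_kernel.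
  - by move=> z; rewrite lee_fin.
  - by apply/measurable_EFinP; case: hg.
have mphi : measurable_fun setT (fun w => Rintegral (kap w) setT h).
  have : measurable_fun setT (fun w => Rintegral (kap w) setT h + C).
    apply/measurable_EFinP.
    rewrite (_ : EFin \o _ = (fun w => (\int[kap w]_z (h z + C)%:E)%E))//.
    by apply/funext => w; rewrite /= ek.
  move=> mp; rewrite (_ : (fun w => _) = (fun w => (Rintegral (kap w) setT h + C) - C)).
    by apply: measurable_funB => //; exact: measurable_cst.
  by apply/funext => w; rewrite addrK.
have hphi : bmf (fun w => Rintegral (kap w) setT h).
  by split => //; exists C => w; apply: Rint_norm.
split => //.
have f0 : forall z, (0 <= (h z + C)%:E)%E by move=> z; rewrite lee_fin.
have mf : measurable_fun setT (fun z => (h z + C)%:E).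
  by apply/measurable_EFinP; case: hg.
have := @integral_mixture _ _ TW Z R m muW kap (measurable_kernel kap) mE
  (fun z => (h z + C)%:E) f0 mf.
rewrite -RintE// RintD// Rint_cst//.
under eq_integral do rewrite ek.
rewrite -RintE//.
rewrite (RintD muW1 hphi (bmf_cst TW C)) (Rint_cst muW1).
  by move=> e; apply: (addIr C); exact: EFin_inj e.
exact: (bmf_add hphi (bmf_cst TW C)).
Qed.


Unset Implicit Arguments.
Theorem corollary1 (R : realType) (M : nat)
    (pi : 'I_M -> R) (K : 'I_M -> 'I_M -> R)
    (dW : measure_display) (TW : measurableType dW)
    (dZ : measure_display) (Z : measurableType dZ)
    (muW : probability TW R)
    (Q : 'I_M -> probability (TW * Z)%type R)
    (P : 'I_M -> probability Z R)
    (kappa : 'I_M -> R.-pker TW ~> Z) :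
  (forall i, 0 < pi i < 1) ->
  \sum_(i < M) pi i = 1 ->
  is_kernel K ->
  EK_diag pi K - EK_indep pi K > 0 ->
  (forall i A, measurable A -> Q i (A `*` setT) = muW A) ->
  (forall i B, measurable B -> Q i (setT `*` B) = P i B) ->
  (forall i A B, measurable A -> measurable B ->
     Q i (A `*` B) = (\int[muW]_(w in A) kappa i w B)%E) ->
  measurable_fun setT (fun w => KMD pi K (fun i => kappa i w)) ->
  ((KMD pi K (fun i => P i))%:E <=
     \int[muW]_w (KMD pi K (fun i => kappa i w))%:E)%E.
Proof.
move=> pi01 pisum hK hD QW QP Qk mKMD.
have pi_gt0 i : 0 < pi i by case/andP: (pi01 i).
have [i0|none] := pickP (fun _ : 'I_M => true); last first.
  exfalso; move: pisum; rewrite big1 => [|i _]; last by have := none i.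
  by move/eqP; rewrite eq_sym oner_eq0.
pose RP : 'I_M -> {measure set Z -> \bar R} := fun i => P i.
have P1 i : RP i setT = 1%E by exact: probability_setT.
pose RK w : 'I_M -> {measure set Z -> \bar R} := fun i => kappa i w.
have K1 w i : RK w i setT = 1%E by exact: prob_kernel.
have muW1 : muW setT = 1%E by exact: probability_setT.
have mE i B : measurable B -> P i B = (\int[muW]_w kappa i w B)%E.
  by move=> mB; rewrite -QP// Qk.
pose q := cond_prob pi RP.
have hq := @cond_probP _ _ _ _ pi RP pi_gt0 P1 i0.
have bq j : bmf (q j) by exact: bmf_q hq.
pose a i z := 2 * bK K q i z - cK K q z.
have ba i : bmf (a i).
  apply: bmf_sub; last exact: bmf_cK.
  by apply: bmf_mul; [exact: bmf_cst|exact: bmf_bK].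
pose phi i w := Rintegral (kappa i w) setT (a i).
have mix i : bmf (phi i) /\
    Rintegral (P i) setT (a i) = Rintegral muW setT (phi i).
  exact: (mix_real muW1 (P1 i) (fun w => prob_kernel w) (mE i) (ba i)).
have bS : bmf (fun w => \sum_(i < M) pi i * phi i w).
  by apply: bmf_sum => i; apply: bmf_mul; [exact: bmf_cst|case: (mix i)].
have EKP : EK_cond pi K RP = Rintegral muW setT (fun w => \sum_(i < M) pi i * phi i w).
  rewrite EK_condE -(@TfunE _ _ _ _ pi RP pi_gt0 P1 i0 q K hq) /Tfun.
  rewrite (Rint_sum muW1); last by move=> i; apply: bmf_mul; [exact: bmf_cst|case: (mix i)].
  apply: eq_bigr => i _; rewrite RintZ//; last by case: (mix i).
  by case: (mix i) => _ <-.
have Tle w : \sum_(i < M) pi i * phi i w <= EK_cond pi K (RK w).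
  have hr := @cond_probP _ _ _ _ pi (RK w) pi_gt0 (K1 w) i0.
  rewrite EK_condE.
  exact: (@Tfun_le _ _ _ _ pi (RK w) pi_gt0 (K1 w) i0 _ q K hr bq hK).
set Dn := EK_diag pi K - EK_indep pi K in hD *.
set E0 := EK_indep pi K.
set B := \sum_(i < M) pi i * \sum_(j < M) `|K i j|.
have bKMD : bmf (fun w => KMD pi K (RK w)).
  split; first exact: mKMD.
  exists ((B + `|E0|) / Dn) => w; rewrite /KMD -/Dn -/E0 normrM normfV (gtr0_norm hD).
  apply: ler_wpM2r; first by rewrite invr_ge0 ltW.
  apply: le_trans (ler_normB _ _) _; apply: lerD => //.
  exact: (@EK_cond_bound _ _ _ _ pi (RK w) pi_gt0 (K1 w)).
rewrite -(RintE muW1 bKMD) lee_fin.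
have hX : bmf (fun w => \sum_(i < M) pi i * phi i w - E0).
  exact: (bmf_sub bS (bmf_cst _ _)).
have -> : KMD pi K (fun i => P i) =
    Rintegral muW setT (fun w => (\sum_(i < M) pi i * phi i w - E0) / Dn).
  rewrite /KMD -/Dn -/E0 -/RP EKP.
  rewrite (@RintegralZr _ _ _ muW setT _ (Dn^-1) measurableT (bmf_int muW1 hX)).
  by rewrite (RintB muW1 bS (bmf_cst _ _)) (Rint_cst muW1).
move=> _.
apply: (Rint_le muW1 (bmf_mul hX (bmf_cst TW (Dn^-1))) bKMD).
move=> w; rewrite /KMD -/Dn -/E0; apply: ler_wpM2r; first by rewrite invr_ge0 ltW.
by rewrite lerD2r; exact: Tle.
Qed.
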